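(* Let $(H,R)$ be a quasitriangular Hopf algebra. Then at least one of the following holds: (i) $|G(H^o)|=1$; (ii) $|G(H^o)|\neq1$ and $G(H^o)\cap Z(H^o)\neq\{1\}$; (iii) $|G(H^o)|\neq1$, $G(H^o)\cap Z(H^o)=\{1\}$, and the center $Z(G(H))$ of the group $G(H)$ is nontrivial.
   Context: Quasitriangular $(H,R)$: $R$ invertible with $(\Delta\otimes\mathrm{id})(R)=R_{13}R_{23}$, $(\mathrm{id}\otimes\Delta)(R)=R_{13}R_{12}$, $\tau\Delta(h)=R\Delta(h)R^{-1}$. $H^o$ is the finite dual Hopf algebra $\{f\in H^*\mid f$ vanishes on some finite-codimensional ideal$\}$. $G(B)$ denotes the group of group-like elements of a Hopf algebra $B$, $Z(B)$ its center. *)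

(* Defs.v *)
From HB Require Import structures.
From mathcomp Require Import all_boot all_order all_algebra.
Set Implicit Arguments. Unset Strict Implicit. Unset Printing Implicit Defensive.
Import GRing.Theory.
Local Open Scope ring_scope.

(* Tensors in H (x) H and H (x) H (x) H are represented as finite sums of
   pure tensors (sequences of pairs / triples).  Two such representatives
   denote the same tensor iff all products of linear functionals agree on
   them (over a field, V (x) W embeds into the dual of V-dual (x) W-dual). *)

Section Hopf.
Variables (k : fieldType) (H : algType k).

Definition tensor2 := seq (H * H)%type.
Definition tensor3 := seq (H * H * H)%type.

Definition ev2 (f g : {scalar H}) (t : tensor2) : k :=
  \sum_(p <- t) f p.1 * g p.2.
Definition ev3 (f g h : {scalar H}) (t : tensor3) : k :=
  \sum_(p <- t) f p.1.1 * g p.1.2 * h p.2.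

Definition teq2 (t u : tensor2) : Prop := forall f g, ev2 f g t = ev2 f g u.
Definition teq3 (t u : tensor3) : Prop := forall f g h, ev3 f g h t = ev3 f g h u.

Definition mul2 (t u : tensor2) : tensor2 :=
  [seq (p.1 * q.1, p.2 * q.2) | p <- t, q <- u].
Definition lin2 (a : k) (t u : tensor2) : tensor2 :=
  [seq (a *: p.1, p.2) | p <- t] ++ u.
Definition flip2 (t : tensor2) : tensor2 := [seq (p.2, p.1) | p <- t].

Definition copl (cop : H -> tensor2) (t : tensor2) : tensor3 :=
  [seq (q.1, q.2, p.2) | p <- t, q <- cop p.1].
Definition copr (cop : H -> tensor2) (t : tensor2) : tensor3 :=
  [seq (p.1, q.1, q.2) | p <- t, q <- cop p.2].

Definition is_hopf (cop : H -> tensor2) (eps : {scalar H}) (S : {linear H -> H})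
  : Prop :=
  (forall (a : k) (x y : H), teq2 (cop (a *: x + y)) (lin2 a (cop x) (cop y))) /\
  (forall x y : H, teq2 (cop (x * y)) (mul2 (cop x) (cop y))) /\
  teq2 (cop 1) [:: (1, 1)] /\
  (forall h : H, teq3 (copl cop (cop h)) (copr cop (cop h))) /\
  (forall x y : H, eps (x * y) = eps x * eps y) /\
  eps 1 = 1 /\
  (forall h : H, \sum_(p <- cop h) eps p.1 *: p.2 = h /\
                 \sum_(p <- cop h) eps p.2 *: p.1 = h) /\
  (forall h : H, \sum_(p <- cop h) S p.1 * p.2 = eps h *: 1 /\
                 \sum_(p <- cop h) p.1 * S p.2 = eps h *: 1).

Definition quasitriangular (cop : H -> tensor2) (R : tensor2) : Prop :=
  [/\ exists Rinv : tensor2,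
        teq2 (mul2 R Rinv) [:: (1, 1)] /\ teq2 (mul2 Rinv R) [:: (1, 1)],
      (* (Delta (x) id)(R) = R13 R23 *)
      teq3 (copl cop R) [seq (p.1, q.1, p.2 * q.2) | p <- R, q <- R],
      (* (id (x) Delta)(R) = R13 R12 *)
      teq3 (copr cop R) [seq (p.1 * q.1, q.2, p.2) | p <- R, q <- R] &
      forall Rinv : tensor2, teq2 (mul2 Rinv R) [:: (1, 1)] ->
        forall h : H, teq2 (flip2 (cop h)) (mul2 (mul2 R (cop h)) Rinv)].

Definition is_ideal (I : pred H) : Prop :=
  [/\ I 0,
      (forall (a : k) x y, I x -> I y -> I (a *: x + y)) &
      (forall x y, I y -> I (x * y) /\ I (y * x))].

Definition finite_codim (I : pred H) : Prop :=
  exists s : seq H, forall h : H, exists c : seq k,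
    I (h - \sum_(i < size s) c`_i *: s`_i).

Definition in_finite_dual (f : {scalar H}) : Prop :=
  exists I : pred H, [/\ is_ideal I, finite_codim I & forall x, I x -> f x = 0].

Definition conv (cop : H -> tensor2) (f g : {scalar H}) (h : H) : k :=
  ev2 f g (cop h).

(* group-like elements of H^o : Delta_{H^o}(f) = f (x) f, eps_{H^o}(f) = 1,
   where Delta_{H^o} is the transpose of multiplication and eps_{H^o}(f) = f(1) *)
Definition grouplike_dual (f : {scalar H}) : Prop :=
  [/\ in_finite_dual f, (forall a b : H, f (a * b) = f a * f b) & f 1 = 1].

Definition central_dual (cop : H -> tensor2) (f : {scalar H}) : Prop :=
  in_finite_dual f /\
  forall g : {scalar H}, in_finite_dual g -> forall h, conv cop f g h = conv cop g f h.

Definition is_unit_dual (eps : {scalar H}) (f : {scalar H}) : Prop :=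
  forall h : H, f h = eps h.

Definition grouplike (cop : H -> tensor2) (eps : {scalar H}) (g : H) : Prop :=
  teq2 (cop g) [:: (g, g)] /\ eps g = 1.

End Hopf.

(* Main.v *)
Require Import Defs.
From HB Require Import structures.
From mathcomp Require Import all_boot all_order all_algebra.
From mathcomp Require Import boolp classical_sets ring.
Set Implicit Arguments. Unset Strict Implicit. Unset Printing Implicit Defensive.
Import GRing.Theory.
Local Open Scope ring_scope.

Section MkS.
Local Open Scope classical_set_scope.
Variables (k : fieldType) (H : algType k).
Definition mkS (h : H -> k) (hl : forall a x y, h (a *: x + y) = a * h x + h y)
  : {scalar H} := HB.pack h (GRing.isLinear.Build k H k^o *%R h hl).
Lemma mkSE h hl x : @mkS h hl x = h x. Proof. by []. Qed.

Definition good (G : set (H * k)%type) : Prop :=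
  (forall z c c', G (z, c) -> G (z, c') -> c = c') /\
  (forall a z c z' c', G (z, c) -> G (z', c') -> G (a *: z + z', a * c + c')).

Variable x : H.
Hypothesis xn0 : x != 0.
Definition G0 : set (H * k)%type := [set p | exists a, p = (a *: x, a)].

Lemma good_G0 : good G0.
Proof.
split.
  move=> z c c' [a [-> ->]] [b [e ->]].
  have : (a - b) *: x = 0 by rewrite scalerBl e subrr.
  by move/eqP; rewrite scaler_eq0 (negbTE xn0) orbF subr_eq0 => /eqP.
move=> a z c z' c' [e [-> ->]] [f [-> ->]]; exists (a * e + f).
by rewrite scalerDl scalerA.
Qed.

Definition PP (A : set (H * k)%type) := good (A `|` G0).

Lemma G0_00 : G0 (0, 0).
Proof. by exists 0; rewrite scale0r. Qed.

Lemma sep_total : exists G, [/\ good G, G (x, 1) & forall y, exists c, G (y, c)].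
Proof.
have [A [PA Amax]] : exists A, PP A /\ forall B, A `<` B -> ~ PP B.
  apply: Zorn_bigcup => F FP Ftot.
  set U := \bigcup_(X in F) X.
  have two : forall p q, (U `|` G0) p -> (U `|` G0) q ->
     exists Y, [/\ PP Y, Y `<=` U, (Y `|` G0) p & (Y `|` G0) q].
    move=> p q [[X FX Xp]|G0p] [[Y FY Yq]|G0q].
    - have [XY|YX] := Ftot _ _ FX FY.
      + exists Y; split; [exact: FP|exact: bigcup_sup|left; exact: XY|by left].
      + exists X; split; [exact: FP|exact: bigcup_sup|by left|left; exact: YX].
    - exists X; split; [exact: FP|exact: bigcup_sup|by left|by right].
    - exists Y; split; [exact: FP|exact: bigcup_sup|by right|by left].
    - exists set0; split; [|by []|by right|by right].
      by rewrite /PP set0U; exact: good_G0.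
  split.
    move=> z c c' p q; have [Y [[PY1 _] _ p' q']] := two _ _ p q.
    exact: PY1 p' q'.
  move=> a z c z' c' p q; have [Y [[_ PY2] YU p' q']] := two _ _ p q.
  case: (PY2 a _ _ _ _ p' q') => [h|h]; [left; exact: YU|by right].
set G := A `|` G0.
have G0G : G0 `<=` G by move=> p; right.
exists G; split => //.
  by apply: G0G; exists 1; rewrite scale1r.
move=> y; apply: contrapT => ny.
have nyc : forall c, ~ G (y, c) by move=> c Gyc; apply: ny; exists c.
pose B : set (H * k)%type :=
  [set p | exists v d a, G (v, d) /\ p = (v + a *: y, d)].
have [G1 G2] := PA.
have G00 : G (0, 0) by exact: G0G G0_00.
have GB : G `<=` B by move=> [v d] Gp; exists v, d, 0; rewrite scale0r addr0.
have By0 : B (y, 0) by exists 0, 0, 1; rewrite add0r scale1r.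
apply: (Amax B).
  split; first by move=> p Ap; apply: GB; left.
  by move=> BA; apply: (nyc 0); left; apply: BA.
rewrite /PP setUidl; last by move=> p /G0G /GB.
split.
  move=> z c c' [v [d [a [Gv [-> ->]]]]] [v' [d' [a' [Gv' [e ->]]]]].
  have [aa|naa] := eqVneq a a'.
    move: e; rewrite aa => /addIr ev; rewrite ev in Gv.
    exact: G1 Gv Gv'.
  exfalso; apply: (nyc ((a - a')^-1 * (d' - d))).
  have Gd : G (v' - v, d' - d).
    have := G2 (-1) _ _ _ _ Gv Gv'.
    by rewrite scaleN1r mulN1r addrC [_ + d']addrC.
  have := G2 ((a - a')^-1) _ _ _ _ Gd G00; rewrite !addr0.
  suff -> : (a - a')^-1 *: (v' - v) = y by [].
  have : (a - a') *: y = v' - v.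
    by rewrite scalerBl; apply/eqP; rewrite subr_eq addrAC -e addrC addKr.
  move=> <-; rewrite scalerA mulVf ?scale1r //.
  by rewrite subr_eq0.
move=> s z c z' c' [v [d [a [Gv [-> ->]]]]] [v' [d' [a' [Gv' [-> ->]]]]].
exists (s *: v + v'), (s * d + d'), (s * a + a'); split; first exact: G2.
congr (_, _).
by rewrite scalerDr scalerDl scalerA addrACA.
Qed.

Lemma sep_fun : exists v : {scalar H}, v x = 1.
Proof.
have [G [[G1 G2] Gx tot]] := sep_total.
pose b z := projT1 (cid (tot z)).
have bP z : G (z, b z) := projT2 (cid (tot z)).
have hl : forall a y z, b (a *: y + z) = a * b y + b z.
  by move=> a y z; apply: G1 (bP _) (G2 a _ _ _ _ (bP y) (bP z)).
exists (mkS hl); rewrite mkSE; exact: G1 (bP x) Gx.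
Qed.
End MkS.

Lemma separate (k : fieldType) (H : algType k) (z : H) :
  (forall v : {scalar H}, v z = 0) -> z = 0.
Proof.
move=> h; apply/eqP; apply: contrapT => /negP nz.
have [v vz] := sep_fun nz; by move: (h v); rewrite vz => /eqP; rewrite oner_eq0.
Qed.

Section Main.
Variables (k : fieldType) (H : algType k).

Lemma scalarZ (v : {scalar H}) a x : v (a *: x) = a * v x.
Proof. by rewrite linearZ. Qed.

Lemma scalar_sum I (t : seq I) (F : I -> k) (G : I -> H) (v : {scalar H}) :
  v (\sum_(p <- t) F p *: G p) = \sum_(p <- t) F p * v (G p).
Proof. rewrite linear_sum; apply: eq_bigr => p _; exact: scalarZ. Qed.

Lemma sep_eq (x y : H) : (forall v : {scalar H}, v x = v y) -> x = y.
Proof.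
move=> h; apply/eqP; rewrite -subr_eq0; apply/eqP; apply: separate => v.
by rewrite linearB /= h subrr.
Qed.

Definition T (f : {scalar H}) (t : tensor2 H) : H := \sum_(p <- t) f p.1 *: p.2.

Lemma evT (f v : {scalar H}) (t : tensor2 H) : ev2 f v t = v (T f t).
Proof. by rewrite /T scalar_sum. Qed.

Lemma teqT (f : {scalar H}) (t w : tensor2 H) : teq2 t w -> T f t = T f w.
Proof. by move=> e; apply: sep_eq => v; rewrite -!evT e. Qed.

Lemma ev2_flip (u v : {scalar H}) (t : tensor2 H) : ev2 u v (flip2 t) = ev2 v u t.
Proof. by rewrite /ev2 big_map; apply: eq_bigr => p _; rewrite mulrC. Qed.

Lemma teq_flip (t w : tensor2 H) : teq2 t w -> teq2 (flip2 t) (flip2 w).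
Proof. by move=> e u v; rewrite !ev2_flip e. Qed.

Lemma T_mul (f : {scalar H}) (fm : forall a b, f (a * b) = f a * f b) t w :
  T f (mul2 t w) = T f t * T f w.
Proof.
rewrite /T /mul2 big_allpairs_dep /= mulr_suml; apply: eq_bigr => p _.
rewrite mulr_sumr; apply: eq_bigr => q _ /=.
by rewrite fm -scalerAl -scalerAr scalerA.
Qed.

Lemma T1 (f : {scalar H}) : f 1 = 1 -> T f [:: (1, 1)] = 1.
Proof. by move=> f1; rewrite /T big_seq1 /= f1 scale1r. Qed.

Lemma Tseq1 (f : {scalar H}) a b : T f [:: (a, b)] = f a *: b.
Proof. by rewrite /T big_seq1. Qed.

Lemma ev2_lin2 (u v : {scalar H}) a (t w : tensor2 H) : ev2 u v (lin2 a t w) = a * ev2 u v t + ev2 u v w.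
Proof.
rewrite /ev2 /lin2 big_cat big_map mulr_sumr; congr (_ + _).
by apply: eq_bigr => p _ /=; rewrite scalarZ mulrA.
Qed.

Lemma cop_sum (cop : H -> tensor2 H)
  (copl : forall (a : k) (x y : H), teq2 (cop (a *: x + y)) (lin2 a (cop x) (cop y)))
  I (t : seq I) (F : I -> k) (G : I -> H) (u v : {scalar H}) :
  ev2 u v (cop (\sum_(p <- t) F p *: G p)) = \sum_(p <- t) F p * ev2 u v (cop (G p)).
Proof.
have c0 : ev2 u v (cop 0) = 0.
  have := copl 1 0 0 u v; rewrite scaler0 addr0 ev2_lin2 mul1r => e.
  by apply: (addIr (ev2 u v (cop 0))); rewrite add0r -e.
elim: t => [|p t IH]; first by rewrite !big_nil.
by rewrite !big_cons copl ev2_lin2 IH.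
Qed.

End Main.

Unset Implicit Arguments.

Theorem mainTheorem12 (k : fieldType) (H : algType k)
  (cop : H -> tensor2 H) (eps : {scalar H}) (S : {linear H -> H})
  (R : tensor2 H) :
  is_hopf cop eps S -> quasitriangular cop R ->
  let trivG := forall f, grouplike_dual f -> is_unit_dual eps f in
  (* (i) |G(H^o)| = 1 *)
  trivG \/
  (* (ii) |G(H^o)| <> 1 and G(H^o) /\ Z(H^o) <> {1} *)
  (~ trivG /\
   exists f, [/\ grouplike_dual f, central_dual cop f & ~ is_unit_dual eps f]) \/
  (* (iii) |G(H^o)| <> 1, G(H^o) /\ Z(H^o) = {1}, Z(G(H)) <> {1} *)
  [/\ ~ trivG,
      (forall f, grouplike_dual f -> central_dual cop f -> is_unit_dual eps f) &
      exists g : H, [/\ grouplike cop eps g, g <> 1 &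
         forall g', grouplike cop eps g' -> g * g' = g' * g]].
Proof.
move=> [copL [copM [cop1 [coass [epsM [eps1 [counit antip]]]]]]].
move=> [[Ri [RRi RiR]] QT1 QT2 QT4] trivG.
case: (pselect trivG) => tG; first by left.
right.
case: (pselect (exists f, [/\ grouplike_dual f, central_dual cop f
                              & ~ is_unit_dual eps f])) => ex.
  by left.
right; split => //.
  by move=> f gf cf; apply: contrapT => nu; apply: ex; exists f.
have [f nf] : exists f, ~ (grouplike_dual f -> is_unit_dual eps f).
  by apply/existsNP.
have [gf nuf] : grouplike_dual f /\ ~ is_unit_dual eps f.
  split; first by apply: contrapT => ng; apply: nf => /ng.
  by move=> u; apply: nf.
have [fin fm f1] := gf.
set phi := T f R; set psi := T f Ri.
have phipsi : phi * psi = 1 by rewrite -T_mul // (teqT f RRi) T1.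
have psiphi : psi * phi = 1 by rewrite -T_mul // (teqT f RiR) T1.
have Q4 h : T f (flip2 (cop h)) = phi * T f (cop h) * psi.
  by rewrite (teqT f (QT4 Ri RiR h)) !T_mul.
have key (u v : {scalar H}) :
    \sum_(p <- R) f p.1 * ev2 u v (cop p.2) = u phi * v phi.
  have L : ev3 f u v (copr cop R) = \sum_(p <- R) f p.1 * ev2 u v (cop p.2).
    rewrite /ev3 /copr big_allpairs_dep; apply: eq_bigr => p _.
    by rewrite /ev2 mulr_sumr; apply: eq_bigr => q _ /=; rewrite mulrA.
  rewrite -L QT2 /ev3 big_allpairs_dep /phi -!evT /ev2 mulrC mulr_suml.
  apply: eq_bigr => p _; rewrite mulr_sumr; apply: eq_bigr => q _ /=.
  rewrite fm; ring.
exists phi; split.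
- split.
    move=> u v; rewrite /phi /T cop_sum // key /ev2 big_seq1 //.
  have e (v : {scalar H}) : v phi = eps phi * v phi.
    rewrite -(key eps v) /phi /T scalar_sum; apply: eq_bigr => p _; congr (_ * _).
    by rewrite -{1}(proj1 (counit p.2)) scalar_sum.
  have ephi : phi = eps phi *: phi by apply: sep_eq => v; rewrite scalarZ -e.
  have : eps (phi * psi) = eps 1 by rewrite phipsi.
  by rewrite {1}ephi -scalerAl scalarZ phipsi eps1 mulr1.
- move=> p1; apply: ex; exists f; split => //; split => // g _ h.
  have psi1 : psi = 1 by rewrite -[psi]mul1r -p1 phipsi.
  by rewrite /conv -(ev2_flip f g) !evT Q4 p1 psi1 mul1r mulr1.
move=> g' [gg eg].
have Tg : T f (cop g') = f g' *: g' by rewrite (teqT f gg) Tseq1.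
have Tfg : T f (flip2 (cop g')) = f g' *: g'.
  by rewrite (teqT f (teq_flip gg)) /flip2 /= Tseq1.
pose fSf x := f (S x).
have fSl : forall a x y, fSf (a *: x + y) = a * fSf x + fSf y.
  by move=> a x y; rewrite /fSf linearP /= linearD /= scalarZ.
have fg0 : f g' != 0.
  apply/eqP => fg0.
  have := f_equal f (proj1 (antip g')); rewrite scalarZ f1 eg mulr1 linear_sum /=.
  have -> : \sum_(p <- cop g') f (S p.1 * p.2) = ev2 (mkS fSl) f (cop g').
    by apply: eq_bigr => p _; rewrite fm.
  by rewrite gg /ev2 big_seq1 /= fg0 mulr0 => /eqP; rewrite eq_sym oner_eq0.
have := Q4 g'; rewrite Tfg Tg -scalerAr -scalerAl => /(scalerI fg0) e.
by rewrite {2}e -mulrA psiphi mulr1.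
Qed.
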